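(* For $n\ge 3$ let $M^n$ be the $5$-ary $n\times n$ matrix with entries $M^n_{i,i}=0$ for $1\le i\le n$; $M^n_{i,i+1}=1$ for $1\le i\le n-1$; $M^n_{n,1}=1$; $M^n_{i,j}=3$ for $j\ge i+2$; $M^n_{i,1}=4$ for $2\le i\le n-1$; and $M^n_{i,j}=2$ for $2\le j\le i-1$. (For example $M^5$ has rows $(0,1,3,3,3),(4,0,1,3,3),(4,2,0,1,3),(4,2,2,0,1),(1,2,2,2,0)$.) Then $M^n$ is not a weak lonesum matrix, while every proper submatrix of $M^n$ (obtained by deleting at least one row or column) is a weak lonesum matrix.
   Context: A $q$-ary matrix has entries in $\{0,1,\ldots,q-1\}$. For a $q$-ary vector $v=(v_1,\ldots,v_n)$ its structure vector is $(a_0,a_1,\ldots,a_{q-1})$ where $a_k$ is the number of coordinates $i$ with $v_i=k$. A $q$-ary $m\times n$ matrix $M$ is a weak lonesum matrix if no other $q$-ary $m\times n$ matrix has the same structure vectors of all rows and of all columns as $M$. Here $q=5$. *)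

(* Defs.v *)
From mathcomp Require Import all_boot all_order all_algebra.
Set Implicit Arguments. Unset Strict Implicit. Unset Printing Implicit Defensive.

Definition row_struct (q m n : nat) (M : 'M['I_q]_(m, n)) (i : 'I_m) (k : 'I_q) : nat :=
  #|[set j : 'I_n | M i j == k]|.

Definition col_struct (q m n : nat) (M : 'M['I_q]_(m, n)) (j : 'I_n) (k : 'I_q) : nat :=
  #|[set i : 'I_m | M i j == k]|.

Definition weak_lonesum (q m n : nat) (M : 'M['I_q]_(m, n)) : Prop :=
  forall N : 'M['I_q]_(m, n),
    (forall i k, row_struct N i k = row_struct M i k) ->
    (forall j k, col_struct N j k = col_struct M j k) ->
    N = M.

Definition submatrix (q m n : nat) (M : 'M['I_q]_(m, n)) (R : {set 'I_m}) (C : {set 'I_n})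
  : 'M['I_q]_(#|R|, #|C|) :=
  \matrix_(i < #|R|, j < #|C|) M (enum_val i) (enum_val j).

(* Entry of M^n at 0-based position (a, b), i.e. 1-based (a+1, b+1). *)
Definition Mentry (n a b : nat) : nat :=
  if a == b then 0
  else if b == a.+1 then 1
  else if a.+2 <= b then 3
  else if b == 0 then (if a == n.-1 then 1 else 4)
  else 2.

Definition Mn (n : nat) : 'M['I_5]_(n, n) :=
  \matrix_(i < n, j < n) (inord (Mentry n i j) : 'I_5).

(* Main.v *)
Require Import Defs.
From mathcomp Require Import all_boot all_order all_algebra.
From Stdlib Require Import ZArith Lia.
Set Implicit Arguments. Unset Strict Implicit. Unset Printing Implicit Defensive.
Lemma sum_eq_le (I : finType) (a b : I -> nat) :
  (forall x, a x <= b x) -> \sum_x a x = \sum_x b x -> forall x, a x = b x.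
Proof.
move=> le eqs x; apply/eqP; rewrite eqn_leq le /=; rewrite leqNgt; apply/negP => lt.
move: eqs; rewrite (bigD1 x) //= [in RHS](bigD1 x) //= => E.
have : a x + \sum_(i | i != x) a i < b x + \sum_(i | i != x) b i.
  by rewrite -addSn leq_add // leq_sum.
by rewrite E ltnn.
Qed.

Lemma sum_decomp (q n : nat) (X : 'I_n -> 'I_q) (F : 'I_q -> nat) :
  \sum_j F (X j) = \sum_k F k * #|[set j | X j == k]|.
Proof.
rewrite (partition_big X predT) //=; apply: eq_bigr => k _.
rewrite (eq_bigr (fun _ => F k)); last by move=> j /eqP ->.
rewrite (eq_bigl (fun j => j \in [set j | X j == k])); last by move=> j; rewrite inE.
by rewrite sum_nat_const mulnC.
Qed.

Lemma cert (q m n : nat) (S : 'M['I_q]_(m, n)) (f : 'I_m -> 'I_q -> nat) (g : 'I_n -> 'I_q -> nat) :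
  (forall i j k, k != S i j -> f i k + g j k < f i (S i j) + g j (S i j)) -> weak_lonesum S.
Proof.
move=> H N hr hc.
pose W (X : 'M['I_q]_(m, n)) := \sum_i \sum_j (f i (X i j) + g j (X i j)).
have WE : forall X, W X = \sum_i \sum_k f i k * row_struct X i k + \sum_j \sum_k g j k * col_struct X j k.
  move=> X; rewrite /W.
  rewrite (eq_bigr (fun i => \sum_j f i (X i j) + \sum_j g j (X i j))); last by move=> i _; rewrite big_split.
  rewrite big_split /=; congr (_ + _).
    by apply: eq_bigr => i _; rewrite (sum_decomp (fun j => X i j) (f i)).
  rewrite exchange_big; apply: eq_bigr => j _.
  by rewrite (sum_decomp (fun i => X i j) (g j)).
have le : forall i j, f i (N i j) + g j (N i j) <= f i (S i j) + g j (S i j).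
  move=> i j; case: (eqVneq (N i j) (S i j)) => [->//|ne]; exact: ltnW (H _ _ _ ne).
have eqW : W N = W S.
  rewrite !WE; congr (_ + _).
    by apply: eq_bigr => i _; apply: eq_bigr => k _; rewrite hr.
  by apply: eq_bigr => j _; apply: eq_bigr => k _; rewrite hc.
apply/matrixP => i j; apply/eqP; apply/negPn/negP => ne.
have Hi : \sum_j (f i (N i j) + g j (N i j)) = \sum_j (f i (S i j) + g j (S i j)).
  by apply: (sum_eq_le _ eqW) => i'; apply: leq_sum => j' _; exact: le.
have Hj := sum_eq_le (le i) Hi j.
by move: (H _ _ _ ne); rewrite Hj ltnn.
Qed.
Definition aZ (n r i : nat) : Z := (Z.of_nat i + (if (i <= r)%nat then Z.of_nat n else 0))%Z.

Definition fZ (n r k i : nat) : Z :=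
  let a := aZ n r i in
  let al := (4 * Z.of_nat n + 1)%Z in
  let B := (100 * Z.of_nat n + 100)%Z in
  let T := (if (i <= r)%nat then 0 else 1)%Z in
  match k with
  | 0 => 0%Z
  | 1 => (-2*a-1)%Z
  | 2 => (2*a-1-al+al*T)%Z
  | 3 => (-4*a-4+al-al*T)%Z
  | _ => (-3*B*((if (i == 0)%nat then 1 else 0) + (if (i == n.-1)%nat then 1 else 0)))%Z
  end.

Definition gZ (n r k j : nat) : Z :=
  let b := aZ n r j in
  let al := (4 * Z.of_nat n + 1)%Z in
  let B := (100 * Z.of_nat n + 100)%Z in
  let L := (8 * Z.of_nat n)%Z in
  let R := (if (j <= r)%nat then 1 else 0)%Z in
  match k with
  | 0 => 0%Z
  | 1 => (2*b)%Z
  | 2 => (-2*b + al*R - L*(if (j == 0)%nat then 1 else 0))%Z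
  | 3 => (4*b - al*R)%Z
  | _ => (if (j == 0)%nat then B else -B)%Z
  end.

Ltac normb := repeat match goal with
| H : is_true (?x <= ?y) |- _ => move/leP: H => H
| H : is_true (?x == ?y) |- _ => move/eqP: H => H
| H : (?x <= ?y) = true |- _ => move/leP: H => H
| H : (?x <= ?y) = false |- _ => move/negbT/leP: H => H
| H : (?x == ?y) = true |- _ => move/eqP: H => H
| H : (?x == ?y) = false |- _ => move/negbT/eqP: H => H
end.

Ltac cif := let H := fresh "H" in case: ifP => H.

Lemma keyZ (n r i j k : nat) : 3 <= n -> r < n -> i < n -> j < n ->
  (i = r -> r.+1 < n -> j <> r.+1) -> (i = r -> r.+1 = n -> j <> 0) ->
  k < 5 -> k <> Mentry n i j ->
  (fZ n r k i + gZ n r k j < fZ n r (Mentry n i j) i + gZ n r (Mentry n i j) j)%Z.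
Proof.
move=> /leP hn /ltP hr /ltP hi /ltP hj ex1 ex2 /ltP hk.
rewrite /Mentry.
repeat cif; normb;
  (destruct k as [|[|[|[|[|k]]]]]; [..|lia]);
  rewrite /fZ /gZ /aZ; cbv beta iota zeta; try lia;
  repeat cif; normb;
  (have ? : i = r -> (r.+1 < n)%coq_nat -> j <> r.+1 by move=> ? /ltP; auto);
  lia.
Qed.


Definition Cst (n : nat) : Z := (1000 * Z.of_nat n + 1000)%Z.

Lemma fZ_bnd n r k i : i < n -> (0 <= fZ n r k i + Cst n)%Z.
Proof.
move=> /ltP hi; rewrite /fZ /aZ /Cst.
destruct k as [|[|[|[|k]]]]; cbv beta iota zeta; repeat cif; normb; lia.
Qed.

Lemma gZ_bnd n r k j : j < n -> (0 <= gZ n r k j + Cst n)%Z.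
Proof.
move=> /ltP hj; rewrite /gZ /aZ /Cst.
destruct k as [|[|[|[|k]]]]; cbv beta iota zeta; repeat cif; normb; lia.
Qed.

Definition Fn n r k i := Z.to_nat (fZ n r k i + Cst n).
Definition Gn n r k j := Z.to_nat (gZ n r k j + Cst n).

Lemma keyN (n r i j k : nat) : 3 <= n -> r < n -> i < n -> j < n ->
  (i = r -> r.+1 < n -> j <> r.+1) -> (i = r -> r.+1 = n -> j <> 0) ->
  k < 5 -> k <> Mentry n i j ->
  Fn n r k i + Gn n r k j < Fn n r (Mentry n i j) i + Gn n r (Mentry n i j) j.
Proof.
move=> h1 h2 h3 h4 h5 h6 h7 h8.
have := keyZ h1 h2 h3 h4 h5 h6 h7 h8.
have := @fZ_bnd n r k i h3; have := @gZ_bnd n r k j h4.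
have := @fZ_bnd n r (Mentry n i j) i h3; have := @gZ_bnd n r (Mentry n i j) j h4.
rewrite /Fn /Gn => *; apply/ltP; rewrite -!plusE; lia.
Qed.

Lemma Mentry_lt5 n a b : Mentry n a b < 5.
Proof. by rewrite /Mentry; repeat cif. Qed.

Lemma MnE n (i j : 'I_n) : val (Mn n i j) = Mentry n i j.
Proof. by rewrite mxE; apply: inordK; exact: Mentry_lt5. Qed.

Lemma Mn_eq n (i j : 'I_n) (k : 'I_5) : (Mn n i j == k) = (Mentry n i j == val k).
Proof. by rewrite -MnE. Qed.

Lemma card_one n (P : pred 'I_n) v : v < n -> (forall j : 'I_n, P j = (val j == v)) ->
  #|[set j | P j]| = 1.
Proof.
move=> hv hP; rewrite (_ : [set j | P j] = [set Ordinal hv]) ?cards1 //.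
apply/setP => j; rewrite !inE hP; apply/eqP/eqP => [h|->//]; exact: val_inj.
Qed.

Lemma M0_row n a b : a < n -> b < n -> (Mentry n a b == 0) = (b == a).
Proof.
move=> /ltP ha /ltP hb; apply/eqP/eqP; rewrite /Mentry; repeat cif; normb; lia.
Qed.

Lemma M1_row n a b : 3 <= n -> a < n -> b < n ->
  (Mentry n a b == 1) = (b == if a.+1 == n then 0 else a.+1).
Proof.
move=> /leP hn /ltP ha /ltP hb; apply/eqP/eqP; rewrite /Mentry; repeat cif; normb; lia.
Qed.

Lemma M1_col n a b : 3 <= n -> a < n -> b < n ->
  (Mentry n a b == 1) = (a == if b == 0 then n.-1 else b.-1).
Proof.
move=> /leP hn /ltP ha /ltP hb; apply/eqP/eqP; rewrite /Mentry; repeat cif; normb; lia.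
Qed.

Definition sw (k : 'I_5) : 'I_5 := inord (if val k == 0 then 1 else if val k == 1 then 0 else val k).

Lemma sw_val k : val (sw k) = (if val k == 0 then 1 else if val k == 1 then 0 else val k).
Proof. rewrite /sw; apply: inordK; by case: k => [[|[|m]] hk]. Qed.

Lemma swK k : sw (sw k) = k.
Proof. apply: val_inj; rewrite !sw_val; by case: k => [[|[|m]] hk]. Qed.

Lemma row01 n (hn : 3 <= n) (i : 'I_n) (k : 'I_5) : val k <= 1 -> row_struct (Mn n) i k = 1.
Proof.
case: k => [[|[|m]] hk] //= _; rewrite /row_struct.
- apply: (@card_one _ _ i) => // j; rewrite Mn_eq M0_row //.
- have hv : (if i.+1 == n then 0 else i.+1) < n.
    case: ifP => h; [exact: leq_trans _ hn | by rewrite ltn_neqAle h ltn_ord].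
  by apply: (card_one hv) => j; rewrite Mn_eq M1_row.
Qed.

Lemma col01 n (hn : 3 <= n) (j : 'I_n) (k : 'I_5) : val k <= 1 -> col_struct (Mn n) j k = 1.
Proof.
case: k => [[|[|m]] hk] //= _; rewrite /col_struct.
- apply: (@card_one _ _ j) => // i; rewrite Mn_eq M0_row // eq_sym.
- have hv : (if (j : nat) == 0 then n.-1 else (j : nat).-1) < n.
    case: ifP => _; first by rewrite prednK ?leqnn // (leq_trans _ hn).
    exact: leq_ltn_trans (leq_pred _) (ltn_ord j).
  by apply: (card_one hv) => i; rewrite Mn_eq M1_col.
Qed.

Lemma MnE' n (i j : 'I_n) : nat_of_ord (Mn n i j) = Mentry n i j.
Proof. exact: MnE. Qed.

Theorem proposition3p8 (n : nat) (hn : 3 <= n) :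
  ~ weak_lonesum (Mn n) /\
  (forall (R C : {set 'I_n}), (R != setT) || (C != setT) ->
     weak_lonesum (submatrix (Mn n) R C)).
Proof.
split.
- move=> H.
  have n0 : 0 < n by exact: leq_trans _ hn.
  pose i0 : 'I_n := Ordinal n0.
  have swE : forall x k : 'I_5, (sw x == k) = (x == sw k).
    by move=> x k; apply/eqP/eqP => [<-|->]; rewrite swK.
  have hr : forall i k, row_struct (map_mx sw (Mn n)) i k = row_struct (Mn n) i k.
    move=> i k.
    have -> : row_struct (map_mx sw (Mn n)) i k = row_struct (Mn n) i (sw k).
      by apply: eq_card => j; rewrite !inE mxE swE.
    case: (leqP (val k) 1) => hk.
      by rewrite !row01 // sw_val; case: (val k) hk => [|[|]].
    congr row_struct; apply: val_inj; rewrite sw_val; by case: (val k) hk => [|[|]].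
  have hc : forall j k, col_struct (map_mx sw (Mn n)) j k = col_struct (Mn n) j k.
    move=> j k.
    have -> : col_struct (map_mx sw (Mn n)) j k = col_struct (Mn n) j (sw k).
      by apply: eq_card => i; rewrite !inE mxE swE.
    case: (leqP (val k) 1) => hk.
      by rewrite !col01 // sw_val; case: (val k) hk => [|[|]].
    congr col_struct; apply: val_inj; rewrite sw_val; by case: (val k) hk => [|[|]].
  move: (H _ hr hc) => /matrixP /(_ i0 i0); rewrite mxE => /(congr1 val).
  by rewrite sw_val MnE /Mentry eqxx.
- move=> R C hRC.
  have [r [rn hex]] : exists r, r < n /\ forall (i j : 'I_n), i \in R -> j \in C ->
      (val i = r -> r.+1 < n -> val j <> r.+1) /\ (val i = r -> r.+1 = n -> val j <> 0).
    case: (pickP (fun x => x \notin R)) => [x hx | hR].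
      exists (val x); split; first exact: ltn_ord.
      move=> i j iR _.
      have ne : val i <> val x by move=> /val_inj h; move: hx; rewrite -h iR.
      by split => /ne.
    have RT : R = setT by apply/setP => x; rewrite inE; apply/negPn; rewrite hR.
    move: hRC; rewrite RT eqxx /= => hC.
    case: (pickP (fun x => x \notin C)) => [c hc | hC'].
      exists (if (c : nat) == 0 then n.-1 else (c : nat).-1); split.
        case: ifP => _; first by rewrite prednK ?leqnn // (leq_trans _ hn).
        exact: leq_ltn_trans (leq_pred _) (ltn_ord c).
      move=> i j _ jC.
      have ne : (j : nat) <> (c : nat) by move=> /val_inj h; move: hc; rewrite -h jC.
      have := ltn_ord c; have := ltn_ord j; move: ne.
      case: ifP => h1; normb => ne /ltP h2 /ltP h3; split => _ ? ?; lia.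
    by move: hC; rewrite (_ : C = setT) ?eqxx //; apply/setP => x; rewrite inE; apply/negPn; rewrite hC'.
  apply: (@cert 5 #|R| #|C| _ (fun (i : 'I_#|R|) (k : 'I_5) => Fn n r k (enum_val i)) (fun (j : 'I_#|C|) (k : 'I_5) => Gn n r k (enum_val j))).
  move=> i j k; rewrite mxE => hk.
  have xR := enum_valP i; have yC := enum_valP j.
  have [e1 e2] := hex _ _ xR yC.
  rewrite MnE'; apply: keyN => //.
  - move=> h; move/negP: hk; apply; apply/eqP; apply: val_inj; by rewrite /= MnE' h.
Qed.
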